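(* (i) The cyclic Kautz digraph $CK(3,\ell)$ with $\ell\ge 3$, $\ell\neq 4$, has diameter $2\ell-1$, and for every $d\ge 3$ the cyclic Kautz digraph $CK(d,3)$ has diameter $2\cdot 3-1=5$. (ii) The cyclic Kautz digraph $CK(3,4)$ has diameter $6$.
   Context: The cyclic Kautz digraph $CK(d,\ell)$ has vertex set $\{x_1\ldots x_\ell\in\mathbb Z_{d+1}^\ell : x_i\neq x_{i+1}\ (1\le i\le \ell-1),\ x_\ell\neq x_1\}$ and arcs $x_1x_2\ldots x_\ell\to x_2\ldots x_\ell y$ for every $y\in\mathbb Z_{d+1}$ with $y\neq x_2,x_\ell$. The diameter is the maximum directed distance between ordered pairs of vertices. *)

(* Defs.v *)
From mathcomp Require Import all_boot.
Unset Printing Implicit Defensive.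

(* Words over the alphabet Z_{d+1} = 'I_d.+1, represented as sequences. *)

Definition ck_vertex (d l : nat) (x : seq 'I_d.+1) : bool :=
  [&& size x == l,
      all (fun i => nth ord0 x i != nth ord0 x i.+1) (iota 0 l.-1)
    & nth ord0 x l.-1 != nth ord0 x 0].

Definition ck_arc (d l : nat) (x z : seq 'I_d.+1) : bool :=
  [&& ck_vertex d l x, ck_vertex d l z &
      [exists y : 'I_d.+1,
         [&& y != nth ord0 x 1, y != nth ord0 x l.-1 & z == rcons (behead x) y]]].

Fixpoint walk_le (d l k : nat) (x z : seq 'I_d.+1) : Prop :=
  match k with
  | 0 => x = z
  | k'.+1 => x = z \/ exists w, ck_arc d l x w /\ walk_le d l k' w z
  end.

Definition ck_diameter (d l D : nat) : Prop :=
  (forall x z, ck_vertex d l x -> ck_vertex d l z -> walk_le d l D x z) /\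
  (exists x z, [/\ ck_vertex d l x, ck_vertex d l z &
                   forall k, k < D -> ~ walk_le d l k x z]).

(* Main.v *)
Require Import Defs.
From mathcomp Require Import all_boot zify.
Set Warnings "-notation-overridden".

Section Gen.
Variables (d l : nat).
Implicit Types (c : nat -> 'I_d.+1).

Definition win c t := mkseq (fun i => c (t + i)) l.

Lemma nth_win c t i : i < l -> nth ord0 (win c t) i = c (t + i).
Proof. by move=> hi; rewrite /win nth_mkseq. Qed.

Lemma vertexP x : ck_vertex d l x ->
  [/\ size x = l, forall i, i.+1 < l -> nth ord0 x i != nth ord0 x i.+1
    & nth ord0 x l.-1 != nth ord0 x 0].
Proof.
case/and3P => /eqP hs /allP ha hl; split => // i hi.
apply: ha; rewrite mem_iota; apply/andP; split => //; lia.
Qed.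

Lemma vertexI x : size x = l -> (forall i, i.+1 < l -> nth ord0 x i != nth ord0 x i.+1) ->
  nth ord0 x l.-1 != nth ord0 x 0 -> ck_vertex d l x.
Proof.
move=> hs ha hl; rewrite /ck_vertex hs eqxx hl andbT /=.
apply/allP => i; rewrite mem_iota => /andP[_ hi]; apply: ha; lia.
Qed.

Lemma win_vertex c t : ck_vertex d l (win c t) ->
  forall i, i.+1 < l -> c (t + i) != c (t + i.+1).
Proof.
case/vertexP => _ h _ i hi; have := h i hi; rewrite !nth_win //; lia.
Qed.

Lemma step c t : 2 <= l -> ck_vertex d l (win c t) ->
  c (t + l) != c (t + 1) -> c (t + l) != c (t + l.-1) ->
  ck_vertex d l (win c t.+1) /\ ck_arc d l (win c t) (win c t.+1).
Proof.
move=> hl hv h1 h2.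
have hv' : ck_vertex d l (win c t.+1).
  apply: vertexI; first by rewrite size_mkseq.
    move=> i hi; rewrite !nth_win; try lia.
    have [hi2|hi2] := ltnP i.+2 l.
      by have := @win_vertex c t hv i.+1 hi2; rewrite !addSnnS.
    have -> : t.+1 + i.+1 = t + l by lia.
    have -> : t.+1 + i = t + l.-1 by lia.
    by rewrite eq_sym.
  rewrite !nth_win; try lia.
  have -> : t.+1 + l.-1 = t + l by lia.
  by rewrite addn0 (_ : t.+1 = t + 1) // addn1.
split => //; rewrite /ck_arc hv hv' /=.
apply/existsP; exists (c (t + l)).
rewrite !nth_win; try lia. rewrite h1 h2 /=.
apply/eqP/(@eq_from_nth _ ord0).
  by rewrite size_rcons size_behead !size_mkseq; lia.
move=> i; rewrite size_mkseq => hi.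
rewrite nth_win // nth_rcons size_behead size_mkseq.
case: ltnP => hi2.
  by rewrite nth_behead nth_win; [rewrite addSnnS | lia].
have -> : i = l.-1 by lia.
rewrite eqxx; congr c; lia.
Qed.

Lemma walk_c c : 2 <= l -> forall k t, ck_vertex d l (win c t) ->
  (forall j, j < k -> c (t + j + l) != c (t + j + 1) /\ c (t + j + l) != c (t + j + l.-1)) ->
  walk_le d l k (win c t) (win c (t + k)).
Proof.
move=> hl; elim=> [|k IH] t hv hc /=; first by rewrite addn0.
right; exists (win c t.+1).
have [h1 h2] := hc 0 (ltn0Sn _); rewrite addn0 in h1 h2.
have [hv' ha] := @step c t hl hv h1 h2; split => //.
rewrite -addSnnS; apply: IH => // j hj.
by have := hc j.+1 hj; rewrite !addSnnS.
Qed.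

Lemma walk_S k x z : walk_le d l k x z -> walk_le d l k.+1 x z.
Proof.
elim: k x => [|k IH] x /=; first by left.
case=> [->|[w [ha hw]]]; first by left.
by right; exists w; split => //; apply: IH.
Qed.

Lemma walk_mono k k' x z : k <= k' -> walk_le d l k x z -> walk_le d l k' x z.
Proof.
move=> hk h; elim: k' hk => [|k' IH] hk; first by move: hk h; rewrite leqn0 => /eqP ->.
have [hlt|<-] : k <= k' \/ k = k'.+1 by lia.
  by apply: walk_S; apply: IH.
by [].
Qed.

End Gen.

Lemma walk_string d l k x z : 2 <= l -> ck_vertex d l x -> walk_le d l k x z ->
  exists k', k' <= k /\ exists c : nat -> 'I_d.+1,
   [/\ (forall i, i < l -> c i = nth ord0 x i),
       (forall i, i < l -> c (k' + i) = nth ord0 z i) &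
       (forall j, l <= j -> j < l + k' -> c j != c j.-1 /\ c j != c (j - l + 1))].
Proof.
move=> hl; elim: k x => [|k IH] x hx /=.
  move=> ->; exists 0; split => //; exists (fun i => nth ord0 z i); split => //.
  by move=> j h1 h2; exfalso; lia.
case=> [->|[w [ha hw]]].
  exists 0; split => //; exists (fun i => nth ord0 z i); split => //.
  by move=> j h1 h2; exfalso; lia.
case/and3P: ha => _ hvw /existsP[y /and3P[hy1 hy2 /eqP hwe]].
have [k' [hk' [c [c1 c2 c3]]]] := IH w hvw hw.
have [hsx _ _] := @vertexP d l x hx.
exists k'.+1; split; first lia.
exists (fun j => if j == 0 then nth ord0 x 0 else c j.-1).
have cw : forall i, i < l -> c i = if i < l.-1 then nth ord0 x i.+1 else y.
  move=> i hi; rewrite c1 // hwe nth_rcons size_behead hsx.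
  case: (ltnP i l.-1) => h; first by rewrite nth_behead.
  by rewrite (_ : i = l.-1) ?eqxx //; lia.
split.
- move=> [|i] hi //=.
  by rewrite cw ?ifT //; lia.
- by move=> i hi; rewrite addSn /=; apply: c2.
- move=> j h1 h2.
  have -> : (j == 0) = false by apply/eqP; lia.
  have [hjl|hjl] := eqVneq j l.
    subst j.
    rewrite cw ?ifF; try lia.
    rewrite (_ : (l - l + 1).-1 = 0); last lia.
    rewrite !cw ?ifT; try lia.
    have -> : (l.-2).+1 = l.-1 by lia.
    by rewrite hy2 hy1.
  have -> : (j.-1 == 0) = false by apply/eqP; lia.
  have -> : (j - l + 1 == 0) = false by apply/eqP; lia.
  have [e1 e2] := c3 j.-1 (ltac:(lia)) (ltac:(lia)).
  have -> : (j - l + 1).-1 = j.-1 - l + 1 by lia.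
  by rewrite e1 e2.
Qed.

Lemma avoid3 d (a b c : 'I_d.+1) : 3 <= d -> exists y : 'I_d.+1, [&& y != a, y != b & y != c].
Proof.
move=> hd.
case: (pickP [pred y : 'I_d.+1 | y \notin [set a; b; c]]) => [y Hy|H].
  by exists y; move: Hy; rewrite /= !inE !negb_or andbA.
have: [set: 'I_d.+1] \subset [set a; b; c].
  by apply/subsetP => y _; move: (H y) => /= /negbFE.
move/subset_leq_card; rewrite cardsT card_ord.
have := leq_card_setU ([set a] :|: [set b]) [set c]; have := leq_card_setU [set a] [set b].
rewrite !cards1 => -[h1 _] [h2 _] => h3; exfalso; move: (leq_trans h3 (leq_trans h2 (leq_add h1 (leqnn 1)))); lia.
Qed.

Lemma chain d (a b : nat -> 'I_d.+1) (u : 'I_d.+1) n : 3 <= d -> 0 < n ->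
  [|| u == a 0, u == b 0 | a 0 == b 0] -> forall e : 'I_d.+1,
  exists w : nat -> 'I_d.+1,
    [/\ (forall i, i < n -> w i != a i /\ w i != b i),
        (forall i, 0 < i -> i < n -> w i != w i.-1),
        w 0 != u & w n.-1 != e].
Proof.
move=> hd; elim: n => [//|n IH] _ hs e.
case: n IH => [|n] IH.
  have [y hy] : exists y : 'I_d.+1, [&& y != a 0, y != b 0, y != u & y != e].
    case/or3P: hs => /eqP h.
    - have [y /and3P[h1 h2 h3]] := @avoid3 d (a 0) (b 0) e hd.
      by exists y; rewrite h h1 h2 h3.
    - have [y /and3P[h1 h2 h3]] := @avoid3 d (a 0) (b 0) e hd.
      by exists y; rewrite h h1 h2 h3.
    - have [y /and3P[h1 h2 h3]] := @avoid3 d (a 0) u e hd.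
      by exists y; rewrite -h h1 h2 h3.
  case/and4P: hy => h1 h2 h3 h4.
  exists (fun _ => y); split => //.
    by move=> [|i] //.
  by move=> i h h'; lia.
have [y /and3P[h1 h2 h3]] := @avoid3 d (a n.+1) (b n.+1) e hd.
have [w [w1 w2 w3 w4]] := IH (ltn0Sn _) hs y.
exists (fun i => if i == n.+1 then y else w i); split => /=.
- move=> i hi; case: (eqVneq i n.+1) => [->|hne]; first by split.
  by apply: w1; lia.
- move=> i h0 hi; case: (eqVneq i n.+1) => [->|hne].
    by rewrite /= ifF; [rewrite eq_sym | apply/eqP; lia].
  rewrite ifF; last by apply/eqP; lia.
  by apply: w2; lia.
- by [].
- by rewrite eqxx.
Qed.

Lemma ne_ix (T : eqType) (f g : nat -> T) a a2 b b2 :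
  a = a2 -> b = b2 -> f a2 != g b2 -> f a != g b.
Proof. by move=> -> ->. Qed.
Arguments ne_ix {T f g a a2 b b2}.
Lemma ne_ixC (T : eqType) (f g : nat -> T) a a2 b b2 :
  a = a2 -> b = b2 -> g b2 != f a2 -> f a != g b.
Proof. by move=> -> ->; rewrite eq_sym. Qed.
Arguments ne_ixC {T f g a a2 b b2}.

Ltac fact2 A B H fb :=
  match goal with
  | |- is_true (A ?a != B ?b) => let t := eval cbv beta in (fb a) in
      apply: (ne_ix (f:=A) (g:=B) (a2:=a) (b2:=t)); [lia|lia|apply: H; lia]
  | |- is_true (B ?b != A ?a) => let t := eval cbv beta in (fb a) in
      apply: (ne_ixC (f:=B) (g:=A) (a2:=t) (b2:=a)); [lia|lia|apply: H; lia]
  end.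
Ltac fact0 A B H a0 b0 :=
  match goal with
  | |- is_true (A ?a != B ?b) => apply: (ne_ix (f:=A) (g:=B) (a2:=a0) (b2:=b0)); [lia|lia|exact: H]
  | |- is_true (B ?b != A ?a) => apply: (ne_ixC (f:=B) (g:=A) (a2:=b0) (b2:=a0)); [lia|lia|exact: H]
  end.

Ltac decif := repeat (case: ifP => ?; try (exfalso; lia)).

Lemma win_eq d l (c : nat -> 'I_d.+1) t x : size x = l ->
  (forall i, i < l -> c (t + i) = nth ord0 x i) -> win d l c t = x.
Proof.
move=> hs h; apply: (@eq_from_nth _ ord0); first by rewrite size_mkseq.
by move=> i; rewrite size_mkseq => hi; rewrite nth_win // h.
Qed.

Section Schemes.
Variables (d l : nat) (x z : seq 'I_d.+1) (w : nat -> 'I_d.+1).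
Hypotheses (hl : 3 <= l) (hx : ck_vertex d l x) (hz : ck_vertex d l z).
Let X i := nth ord0 x i.
Let Z i := nth ord0 z i.

Lemma zfacts : (forall i, i.+1 < l -> Z i != Z i.+1) /\ Z l.-1 != Z 0.
Proof. by case: (@vertexP d l z hz). Qed.

Definition cc m j := if j < l then X j else if j < l + m then w (j - l) else Z (j - l - m).

Lemma scheme_walk m : (forall j, j < l + m -> cc m (j + l) != cc m (j + 1) /\ cc m (j + l) != cc m (j + l.-1)) ->
  walk_le d l (l + m) x z.
Proof.
move=> h.
have [sx _ _] := @vertexP d l x hx.
have [sz _ _] := @vertexP d l z hz.
have hx' : win d l (cc m) 0 = x.
  by apply: win_eq => // i hi; rewrite /cc add0n hi.
have hz' : win d l (cc m) (0 + (l + m)) = z.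
  apply: win_eq => // i hi; rewrite /cc add0n ifF; last by apply/negbTE; lia.
  by rewrite ifF; [congr Z; lia | apply/negbTE; lia].
rewrite -{1}hx' -hz'; apply: walk_c; first lia.
  by rewrite hx'.
by move=> j hj; rewrite !add0n; apply: h.
Qed.

Lemma schemeP :
  (forall i, i < l.-1 -> w i != X i.+1) -> (forall i, i < l.-1 -> w i != Z i) ->
  (forall i, 0 < i -> i < l.-1 -> w i != w i.-1) -> w 0 != X l.-1 -> w l.-2 != Z 0 ->
  walk_le d l (2 * l - 1) x z.
Proof.
move=> P1 P2 P3 P4 P5.
have [Z1 Z2] := zfacts.
have -> : 2 * l - 1 = l + l.-1 by lia.
apply: scheme_walk => j hj; rewrite /cc.
have [hA|hB] := ltnP j l.-1; decif; split;
  first [ fact2 w X P1 (fun i => i.+1) | fact2 w Z P2 (fun i : nat => i)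
        | fact2 w w P3 (fun i => i.-1) | fact0 w X P4 0 l.-1 | fact0 w Z P5 l.-2 0
        | fact2 Z Z Z1 (fun i => i.+1) | fact0 Z Z Z2 l.-1 0 ].
Qed.

Lemma schemeQ :
  (forall i, i < l.-2 -> w i != X i.+1) -> (forall i, i < l.-2 -> w i != Z i.+1) ->
  (forall i, 0 < i -> i < l.-2 -> w i != w i.-1) -> w 0 != X l.-1 -> w (l - 3) != Z 0 ->
  Z 0 != X l.-1 ->
  walk_le d l (2 * l - 1) x z.
Proof.
move=> Q1 Q2 Q3 Q4 Q5 Q6.
have [Z1 Z2] := zfacts.
apply: (@walk_mono d l (l + l.-2)); first lia.
apply: scheme_walk => j hj; rewrite /cc.
have [hA|hB] := ltnP j l.-2; decif; split;
  first [ fact2 w X Q1 (fun i => i.+1) | fact2 w Z Q2 (fun i => i.+1)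
        | fact2 w w Q3 (fun i => i.-1) | fact0 w X Q4 0 l.-1 | fact0 w Z Q5 (l - 3) 0
        | fact0 Z X Q6 0 l.-1
        | fact2 Z Z Z1 (fun i => i.+1) | fact0 Z Z Z2 l.-1 0 ].
Qed.

End Schemes.

Lemma upper d l x z : 3 <= d -> 3 <= l -> ck_vertex d l x -> ck_vertex d l z ->
  walk_le d l (2 * l - 1) x z.
Proof.
move=> hd hl hx hz.
set X := nth ord0 x; set Z := nth ord0 z.
have [_ Zv1 Zv2] := @vertexP d l z hz.
case: (boolP [|| X l.-1 == X 1, X l.-1 == Z 0 | X 1 == Z 0]) => h1.
  have [w [w1 w2 w3 w4]] := @chain d (fun i => X i.+1) (fun i => Z i) (X l.-1) l.-1 hd
     (ltac:(clear -hl; lia)) h1 (Z 0).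
  apply: (@schemeP d l x z w) => //.
  - by move=> i hi; case: (w1 i hi).
  - by move=> i hi; case: (w1 i hi).
rewrite !negb_or in h1; case/and3P: h1 => h11 h12 h13.
case: (boolP [|| X l.-1 == Z 1 | X 1 == Z 1]) => h2.
  have hs : [|| X l.-1 == X 1, X l.-1 == Z 1 | X 1 == Z 1] by rewrite h2 orbT.
  have [w [w1 w2 w3 w4]] := @chain d (fun i => X i.+1) (fun i => Z i.+1) (X l.-1) l.-2 hd
     (ltac:(clear -hl; lia)) hs (Z 0).
  apply: (@schemeQ d l x z w) => //.
  - by move=> i hi; case: (w1 i hi).
  - by move=> i hi; case: (w1 i hi).
  - by rewrite (_ : l - 3 = l.-2.-1); last (clear -hl; lia).
  - by rewrite eq_sym.
rewrite !negb_or in h2; case/andP: h2 => h21 h22.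
have hs : [|| Z 1 == X 2, Z 1 == Z 1 | X 2 == Z 1] by rewrite eqxx orbT.
have [w [w1 w2 w3 w4]] := @chain d (fun i => X i.+2) (fun i => Z i.+1) (Z 1) l.-2 hd
     (ltac:(clear -hl; lia)) hs (Z 0).
apply: (@schemeP d l x z (fun i => if i == 0 then Z 1 else w i.-1)) => //.
- move=> [|i] hi /=; first by rewrite eq_sym.
  have hi' : i < l.-2 by clear -hi hl; lia.
  by case: (w1 i hi').
- move=> [|i] hi /=; first by rewrite eq_sym; apply: Zv1; clear -hl; lia.
  have hi' : i < l.-2 by clear -hi hl; lia.
  by case: (w1 i hi').
- move=> [|[|i]] // _ hi /=.
  have hi' : i.+1 < l.-2 by clear -hi hl; lia.
  by apply: w2.
- by rewrite /= eq_sym.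
- have -> : (l.-2 == 0) = false by apply/eqP; clear -hl; lia.
  by [].
Qed.

Definition Xo l i := if i == l.-1 then 2 else i %% 2.
Definition Zo (i : nat) := if i == 0 then 2 else i %% 2.

Section OddLower.
Variables (l d k : nat) (cv : nat -> nat).
Hypotheses (hl : 3 <= l) (hodd : l %% 2 = 1) (hd : l = 3 \/ d = 3) (hk : k < 2 * l - 1).
Hypothesis F1 : forall i, i < l -> cv i = Xo l i.
Hypothesis F2 : forall i, i < l -> cv (k + i) = Zo i.
Hypothesis F3 : forall j, l <= j -> j < l + k -> cv j <> cv j.-1 /\ cv j <> cv (j - l + 1).
Hypothesis F4 : forall j, cv j <= d.

Lemma F2' i p : i < l -> p = k + i -> cv p = Zo i.
Proof. by move=> hi ->; apply: F2. Qed.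
Lemma F3a j p : l <= j -> j < l + k -> p = j.-1 -> cv j <> cv p.
Proof. by move=> h1 h2 ->; case: (F3 j h1 h2). Qed.
Lemma F3b j p : l <= j -> j < l + k -> p = j - l + 1 -> cv j <> cv p.
Proof. by move=> h1 h2 ->; case: (F3 j h1 h2). Qed.
Lemma F1' i : i < l -> cv i = if i == l.-1 then 2 else i %% 2.
Proof. exact: F1. Qed.
Lemma Zo0 : Zo 0 = 2. Proof. by []. Qed.
Lemma ZoS i : 0 < i -> Zo i = i %% 2.
Proof. by rewrite /Zo; case: i. Qed.

Lemma odd_lower : False.
Proof.
have X0 : forall i, i < l.-1 -> cv i = i %% 2.
  by move=> i hi; rewrite F1' ?ifF //; [apply/eqP|]; lia.
have Xl : cv l.-1 = 2 by rewrite F1' ?eqxx //; lia.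
have [k0|kpos] := eqVneq k 0.
  have := F2 0 (ltac:(lia)); have := X0 0 (ltac:(lia)).
  by rewrite k0 Zo0 addn0 => ->.
have [klt|kge] := ltnP k l.
  have e1 := F2' (l.-1 - k) (l.-1) (ltac:(lia)) (ltac:(lia)).
  have [kl1|kl1] := eqVneq k l.-1.
    have := F3b (l) (1) (leqnn _) (ltac:(lia)) (ltac:(lia)).
    rewrite (F2' (1) (l) (ltac:(lia)) (ltac:(lia))) X0; last lia.
    by rewrite ZoS.
  by move: e1; rewrite Xl ZoS; lia.
have [kl|kl] := eqVneq k l.
  have := F3a (l) (l.-1) (leqnn _) (ltac:(lia)) (ltac:(lia)).
  by rewrite (F2' (0) (l) (ltac:(lia)) (ltac:(lia))) Xl Zo0.
have [k2|k2] := eqVneq k (2 * l - 2).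
  have := F3b (k) (l.-1) (ltac:(lia)) (ltac:(lia)) (ltac:(lia)).
  by rewrite (F2' (0) (k) (ltac:(lia)) (ltac:(lia))) Xl Zo0.
have [m hm] : exists m, k = l + m by exists (k - l); lia.
have [mo|me] : m %% 2 = 1 \/ m %% 2 = 0 by lia.
  have := F3b (k.+1) (m + 2) (ltac:(lia)) (ltac:(lia)) (ltac:(lia)).
  rewrite (F2' (1) (k.+1) (ltac:(lia)) (ltac:(lia))) X0; last lia.
  by rewrite ZoS //; lia.
have d3 : d = 3 by lia.
have W : forall t, t < m -> cv (l + t) = if t %% 2 == 1 then 2 else 3.
  elim=> [|t IH] ht.
    have h1 := F3a (l + 0) (l.-1) (ltac:(lia)) (ltac:(lia)) (ltac:(lia)).
    have h2 := F3b (l + 0) (1) (ltac:(lia)) (ltac:(lia)) (ltac:(lia)).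
    have h3 := F3b (k + (l - m - 1)) (l + 0) (ltac:(lia)) (ltac:(lia)) (ltac:(lia)).
    rewrite (F2' (l - m - 1) (k + (l - m - 1))) // in h3; last lia.
    rewrite ZoS in h3; last lia.
    rewrite Xl in h1; rewrite (X0 1) in h2; try lia.
    have := F4 (l + 0); rewrite d3 (_ : (0 %% 2 == 1) = false) //; lia.
  have h1 := F3a (l + t.+1) (l + t) (ltac:(lia)) (ltac:(lia)) (ltac:(lia)).
  have h2 := F3b (l + t.+1) (t.+2) (ltac:(lia)) (ltac:(lia)) (ltac:(lia)).
  have h3 := F3b (k + (l + t.+1 - m - 1)) (l + t.+1) (ltac:(lia)) (ltac:(lia)) (ltac:(lia)).
  rewrite (F2' (l + t.+1 - m - 1) (k + (l + t.+1 - m - 1))) // in h3; last lia.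
  rewrite ZoS in h3; last lia.
  rewrite IH in h1; last lia.
  rewrite (X0 t.+2) in h2; try lia.
  have := F4 (l + t.+1); rewrite d3.
  move: h1 h2 h3; case: ifP => /eqP ho; case: ifP => /eqP ho'; lia.
have := F3a (k) (l + m.-1) (ltac:(lia)) (ltac:(lia)) (ltac:(lia)).
rewrite (F2' (0) (k) (ltac:(lia)) (ltac:(lia))) W; last lia.
rewrite ifT ?Zo0 //; apply/eqP; lia.
Qed.

End OddLower.

Definition Xe l i := if i == l - 1 then 3 else if i == l - 2 then 1 else if i == l - 3 then 2
  else if i == 1 then 1 else if i %% 2 == 1 then 3 else 0.
Definition Ze l i := if i == 0 then 3 else if i == l - 1 then 1 else if i == 1 then 1
  else if i %% 2 == 1 then 3 else 0.

Ltac ifs := repeat (case: eqP => ?; try (exfalso; lia)); try lia.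

Section EvenLower.
Variables (l k : nat) (cv : nat -> nat).
Hypotheses (hl : 6 <= l) (hev : l %% 2 = 0) (hk : k < 2 * l - 1).
Hypothesis F1 : forall i, i < l -> cv i = Xe l i.
Hypothesis F2 : forall i, i < l -> cv (k + i) = Ze l i.
Hypothesis F3 : forall j, l <= j -> j < l + k -> cv j <> cv j.-1 /\ cv j <> cv (j - l + 1).
Hypothesis F4 : forall j, cv j <= 3.

Let F3a {j p : nat} : l <= j -> j < l + k -> p = j.-1 -> cv j <> cv p.
Proof. by move=> h1 h2 ->; case: (F3 j h1 h2). Qed.
Let F3b {j p : nat} : l <= j -> j < l + k -> p = j - l + 1 -> cv j <> cv p.
Proof. by move=> h1 h2 ->; case: (F3 j h1 h2). Qed.

Let XE {i : nat} : i < l - 3 -> i %% 2 = 0 -> cv i = 0.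
Proof.
move=> h1 h2; rewrite F1; last lia.
rewrite /Xe; ifs.
Qed.
Let XO {i : nat} : 3 <= i -> i < l - 3 -> i %% 2 = 1 -> cv i = 3.
Proof.
move=> h0 h1 h2; rewrite F1; last lia.
rewrite /Xe; ifs.
Qed.
Let X1 : cv 1 = 1.
Proof. rewrite F1 /Xe; [ifs | lia]. Qed.
Let X3 : cv (l - 3) = 2.
Proof. rewrite F1 /Xe; [ifs | lia]. Qed.
Let X2 : cv (l - 2) = 1.
Proof. rewrite F1 /Xe; [ifs | lia]. Qed.
Let Xl : cv (l - 1) = 3.
Proof. rewrite F1 /Xe; [ifs | lia]. Qed.

Let Zp {i p : nat} : i < l -> p = k + i -> cv p = Ze l i.
Proof. by move=> hi ->; apply: F2. Qed.
Let ZE {i p : nat} : 2 <= i -> i < l - 1 -> i %% 2 = 0 -> p = k + i -> cv p = 0.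
Proof.
move=> h0 h1 h2 hp; rewrite (Zp (i:=i) (p:=p) _ hp); last lia.
rewrite /Ze; ifs.
Qed.
Let ZO {i p : nat} : 3 <= i -> i < l - 1 -> i %% 2 = 1 -> p = k + i -> cv p = 3.
Proof.
move=> h0 h1 h2 hp; rewrite (Zp (i:=i) (p:=p) _ hp); last lia.
rewrite /Ze; ifs.
Qed.
Let Z0 {p : nat} : p = k -> cv p = 3.
Proof. by move=> hp; rewrite (Zp (i:=0) (p:=p)); [|lia|lia]. Qed.
Let Z1 {p : nat} : p = k + 1 -> cv p = 1.
Proof. by move=> hp; rewrite (Zp (i:=1) (p:=p)) // /Ze; ifs. Qed.

Lemma even_lower : False.
Proof.
have [k0|kpos] := eqVneq k 0.
  by have := XE (i:=0) (ltac:(lia)) (ltac:(lia)); rewrite (Z0 (p := 0)) //.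
have [klt|kge] := ltnP k l.
  have e1 := Zp (i := l - 1 - k) (p := l - 1) (ltac:(lia)) (ltac:(lia)).
  rewrite Xl in e1.
  have [kl1|kl1] := eqVneq k (l - 1).
    have := F3b (j := l) (p := 1) (leqnn _) (ltac:(lia)) (ltac:(lia)).
    by rewrite X1 (Z1 (p := l)) //; lia.
  have [i1|[ie|io]] : l - 1 - k = 1 \/ (l - 1 - k) %% 2 = 0 \/ ((l - 1 - k) %% 2 = 1 /\ 3 <= l - 1 - k) by lia.
  - by move: e1; rewrite /Ze; ifs.
  - by move: e1; rewrite /Ze; ifs.
  - have := ZE (i := l - 2 - k) (p := l - 2) (ltac:(lia)) (ltac:(lia)) (ltac:(lia)) (ltac:(lia)).
    by rewrite X2.
have [kl|kl] := eqVneq k l.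
  have := F3a (j := l) (p := l - 1) (leqnn _) (ltac:(lia)) (ltac:(lia)).
  by rewrite Xl (Z0 (p := l)).
have [k2|k2] := eqVneq k (2 * l - 2).
  have := F3b (j := k) (p := l - 1) (ltac:(lia)) (ltac:(lia)) (ltac:(lia)).
  by rewrite Xl (Z0 (p := k)).
have [m hm] : exists m, k = l + m by exists (k - l); lia.
have [c1|[c2|[c3|[c4|c5]]]] : (m %% 2 = 0 /\ m <= l - 6) \/ m = l - 4 \/ (m %% 2 = 1 /\ m <= l - 7)
   \/ m = l - 5 \/ m = l - 3 by lia.
- have := F3b (j := k) (p := m + 1) (ltac:(lia)) (ltac:(lia)) (ltac:(lia)).
  by rewrite (Z0 (p := k)) // (XO (i := m + 1)) //; lia.
- have := F3b (j := k + 1) (p := l - 2) (ltac:(lia)) (ltac:(lia)) (ltac:(lia)).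
  by rewrite (Z1 (p := k + 1)) // X2.
- have := F3b (j := k + 2) (p := m + 3) (ltac:(lia)) (ltac:(lia)) (ltac:(lia)).
  by rewrite (ZE (i := 2) (p := k + 2)) // ?(XE (i := m + 3)) //; lia.
- have := F3b (j := k + 3) (p := l - 1) (ltac:(lia)) (ltac:(lia)) (ltac:(lia)).
  by rewrite (ZO (i := 3) (p := k + 3)) // ?Xl //; lia.
have W : forall t, t < l - 4 -> cv (l + t) = if t %% 2 == 1 then 1 else 2.
  elim=> [|t IH] ht.
    have h1 := F3a (j := l + 0) (p := l - 1) (ltac:(lia)) (ltac:(lia)) (ltac:(lia)).
    have h2 := F3b (j := l + 0) (p := 1) (ltac:(lia)) (ltac:(lia)) (ltac:(lia)).
    have h3 := F3b (j := k + 2) (p := l + 0) (ltac:(lia)) (ltac:(lia)) (ltac:(lia)).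
    have e3 := ZE (i := 2) (p := k + 2) (ltac:(lia)) (ltac:(lia)) (ltac:(lia)) (ltac:(lia)).
    have := F4 (l + 0); rewrite (_ : (0 %% 2 == 1) = false) //; lia.
  have h1 := F3a (j := l + t.+1) (p := l + t) (ltac:(lia)) (ltac:(lia)) (ltac:(lia)).
  have h2 := F3b (j := l + t.+1) (p := t.+2) (ltac:(lia)) (ltac:(lia)) (ltac:(lia)).
  have h3 := F3b (j := k + t.+3) (p := l + t.+1) (ltac:(lia)) (ltac:(lia)) (ltac:(lia)).
  have := IH (ltac:(lia)); have := F4 (l + t.+1).
  have [to|te] : t.+1 %% 2 = 1 \/ t.+1 %% 2 = 0 by lia.
    have e2 := XE (i := t.+2) (ltac:(lia)) (ltac:(lia)).
    have e3 := ZO (i := t.+3) (p := k + t.+3) (ltac:(lia)) (ltac:(lia)) (ltac:(lia)) (ltac:(lia)).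
    rewrite to (_ : (t %% 2 == 1) = false) //; last (apply/eqP; lia).
    rewrite eqxx; lia.
  have e2 := XO (i := t.+2) (ltac:(lia)) (ltac:(lia)) (ltac:(lia)).
  have e3 := ZE (i := t.+3) (p := k + t.+3) (ltac:(lia)) (ltac:(lia)) (ltac:(lia)) (ltac:(lia)).
  rewrite te (_ : (t %% 2 == 1) = true) //; last (apply/eqP; lia).
  rewrite /=; lia.
have h1 := F3a (j := l + (l - 4)) (p := l + (l - 5)) (ltac:(lia)) (ltac:(lia)) (ltac:(lia)).
have h2 := F3b (j := l + (l - 4)) (p := l - 3) (ltac:(lia)) (ltac:(lia)) (ltac:(lia)).
have h3 := F3b (j := k + (l - 2)) (p := l + (l - 4)) (ltac:(lia)) (ltac:(lia)) (ltac:(lia)).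
have e3 := ZE (i := l - 2) (p := k + (l - 2)) (ltac:(lia)) (ltac:(lia)) (ltac:(lia)) (ltac:(lia)).
have h4 := F3a (j := k) (p := l + (l - 4)) (ltac:(lia)) (ltac:(lia)) (ltac:(lia)).
have e4 := Z0 (p := k) (erefl _).
have := W (l - 5) (ltac:(lia)); rewrite ifT; last (apply/eqP; lia).
have := F4 (l + (l - 4)).
rewrite X3 in h2; lia.
Qed.

End EvenLower.


Lemma mk_vertex d l (X : nat -> nat) : (forall i, X i <= d) -> 2 <= l ->
  (forall i, i.+1 < l -> X i <> X i.+1) -> X l.-1 <> X 0 ->
  ck_vertex d l (mkseq (fun i => inord (X i) : 'I_d.+1) l).
Proof.
move=> hX hl h1 h2.
have ne : forall a b, X a <> X b -> (inord (X a) : 'I_d.+1) != inord (X b).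
  move=> a b hab; apply/eqP => e; have := congr1 (@nat_of_ord _) e.
  by rewrite !inordK // ltnS.
apply: vertexI; first by rewrite size_mkseq.
  by move=> i hi; rewrite !nth_mkseq //; [apply: ne; apply: h1 | lia].
by rewrite !nth_mkseq; [apply: ne | lia | lia].
Qed.

Lemma extract d l k (X Z : nat -> nat) : 2 <= l -> (forall i, X i <= d) -> (forall i, Z i <= d) ->
  ck_vertex d l (mkseq (fun i => inord (X i) : 'I_d.+1) l) ->
  walk_le d l k (mkseq (fun i => inord (X i) : 'I_d.+1) l) (mkseq (fun i => inord (Z i) : 'I_d.+1) l) ->
  exists k', k' <= k /\ exists cv : nat -> nat,
   [/\ forall i, i < l -> cv i = X i, forall i, i < l -> cv (k' + i) = Z i,
       forall j, l <= j -> j < l + k' -> cv j <> cv j.-1 /\ cv j <> cv (j - l + 1)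
     & forall j, cv j <= d].
Proof.
move=> hl hX hZ hv hw.
have [k' [hk [c [c1 c2 c3]]]] := @walk_string d l k _ _ hl hv hw.
exists k'; split => //; exists (fun j => nat_of_ord (c j)); split.
- by move=> i hi; rewrite c1 // nth_mkseq // inordK // ltnS.
- by move=> i hi; rewrite c2 // nth_mkseq // inordK // ltnS.
- move=> j h1 h2; have [n1 n2] := c3 j h1 h2.
  by split => e; [move/negP: n1 | move/negP: n2]; apply; apply/eqP; apply: val_inj.
- by move=> j; rewrite -ltnS.
Qed.

Lemma lower_odd d l : 3 <= l -> l %% 2 = 1 -> (l = 3 \/ d = 3) -> 3 <= d ->
  exists x z, [/\ ck_vertex d l x, ck_vertex d l z &
    forall k, k < 2 * l - 1 -> ~ walk_le d l k x z].
Proof.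
move=> hl ho hd hd3.
have hX : forall i, Xo l i <= d by move=> i; rewrite /Xo; ifs.
have hZ : forall i, Zo i <= d by move=> i; rewrite /Zo; ifs.
have vx := @mk_vertex d l (Xo l) hX (ltac:(lia)) (ltac:(move=> i hi; rewrite /Xo; ifs)) (ltac:(rewrite /Xo; ifs)).
have vz := @mk_vertex d l Zo hZ (ltac:(lia)) (ltac:(move=> i hi; rewrite /Zo; ifs)) (ltac:(rewrite /Zo; ifs)).
exists (mkseq (fun i => inord (Xo l i) : 'I_d.+1) l), (mkseq (fun i => inord (Zo i) : 'I_d.+1) l).
split => // k hk hw.
have [k' [hk' [cv [F1 F2 F3 F4]]]] := @extract _ l k _ _ (ltac:(lia)) hX hZ vx hw.
by apply: (@odd_lower l d k' cv) => //; lia.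
Qed.

Lemma lower_even l : 6 <= l -> l %% 2 = 0 ->
  exists x z, [/\ ck_vertex 3 l x, ck_vertex 3 l z &
    forall k, k < 2 * l - 1 -> ~ walk_le 3 l k x z].
Proof.
move=> hl he.
have hX : forall i, Xe l i <= 3 by move=> i; rewrite /Xe; ifs.
have hZ : forall i, Ze l i <= 3 by move=> i; rewrite /Ze; ifs.
have vx := @mk_vertex 3 l (Xe l) hX (ltac:(lia)) (ltac:(move=> i hi; rewrite /Xe; ifs)) (ltac:(rewrite /Xe; ifs)).
have vz := @mk_vertex 3 l (Ze l) hZ (ltac:(lia)) (ltac:(move=> i hi; rewrite /Ze; ifs)) (ltac:(rewrite /Ze; ifs)).
exists (mkseq (fun i => inord (Xe l i) : 'I_4) l), (mkseq (fun i => inord (Ze l i) : 'I_4) l).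
split => // k hk hw.
have [k' [hk' [cv [F1 F2 F3 F4]]]] := @extract _ l k _ _ (ltac:(lia)) hX hZ vx hw.
by apply: (@even_lower l k' cv) => //; lia.
Qed.

Definition arcb d l (A : seq 'I_d.+1) (x w : seq 'I_d.+1) : bool :=
  [&& ck_vertex d l x, ck_vertex d l w &
      has (fun y => [&& y != nth ord0 x 1, y != nth ord0 x l.-1 & w == rcons (behead x) y]) A].

Lemma arcbE d l A x w : (forall y, y \in A) -> arcb d l A x w = ck_arc d l x w.
Proof.
move=> hA; rewrite /arcb /ck_arc; congr [&& _, _ & _].
apply/hasP/existsP => [[y _ h]|[y h]]; first by exists y.
by exists y.
Qed.

Fixpoint reachb d l (A : seq 'I_d.+1) k (x z : seq 'I_d.+1) : bool :=
  match k with
  | 0 => x == z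
  | k'.+1 => (x == z) || has (fun w => arcb d l A x w && reachb d l A k' w z)
                              [seq rcons (behead x) y | y <- A]
  end.

Lemma reachbP d l A k x z : (forall y, y \in A) -> walk_le d l k x z <-> reachb d l A k x z.
Proof.
move=> hA; elim: k x => [|k IH] x /=; first by split => [->|/eqP].
split.
  case=> [->|[w [ha hw]]]; first by rewrite eqxx.
  apply/orP; right; apply/hasP; exists w.
    case/and3P: ha => _ _ /existsP[y /and3P[_ _ /eqP ->]].
    by apply/mapP; exists y.
  by rewrite arcbE // ha /=; apply/IH.
case/orP => [/eqP ->|/hasP[w _ /andP[ha hr]]]; first by left.
rewrite arcbE // in ha.
by right; exists w; split => //; apply/IH.
Qed.

Definition E4 : seq 'I_4 := [:: @Ordinal 4 0 isT; @Ordinal 4 1 isT; @Ordinal 4 2 isT; @Ordinal 4 3 isT].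
Lemma E4P y : y \in E4.
Proof. by case: y => [[|[|[|[|n]]]] h]. Qed.

Lemma walk_snoc d l k x w z : walk_le d l k x w -> ck_arc d l w z -> walk_le d l k.+1 x z.
Proof.
elim: k x => [|k IH] x /=.
  by move=> -> ha; right; exists z; split.
case=> [->|[v [ha hv]]] hb.
  by right; exists z; split => //; left.
by right; exists v; split => //; apply: IH.
Qed.

Definition succs d l A (x : seq 'I_d.+1) :=
  [seq w <- [seq rcons (behead x) y | y <- A] | arcb d l A x w].

Fixpoint layer d l A k (x : seq 'I_d.+1) : seq (seq 'I_d.+1) :=
  match k with
  | 0 => [:: x]
  | k'.+1 => let R := layer d l A k' x in undup (R ++ flatten (map (succs d l A) R))
  end.

Lemma layerP d l A k x z : (forall y, y \in A) -> z \in layer d l A k x -> walk_le d l k x z.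
Proof.
move=> hA; elim: k z => [|k IH] z /=.
  by rewrite inE => /eqP ->.
rewrite mem_undup mem_cat => /orP[/IH h|]; first exact: walk_S.
case/flattenP => s /mapP[w hw ->]; rewrite mem_filter => /andP[ha _].
apply: (@walk_snoc d l k x w z (IH _ hw)); by rewrite -(@arcbE d l A w z hA).
Qed.

Definition V4 : seq (seq 'I_4) :=
  flatten (map (fun a => flatten (map (fun b => flatten (map (fun c =>
     map (fun e => [:: a; b; c; e]) E4) E4)) E4)) E4).

Lemma inV4 (x : seq 'I_4) : size x = 4 -> x \in V4.
Proof.
case: x => [|a [|b [|c [|e [|? ?]]]]] // _.
apply/flattenP; exists (flatten (map (fun b0 => flatten (map (fun c0 =>
     map (fun e0 => [:: a; b0; c0; e0]) E4) E4)) E4)); first by apply/mapP; exists a; rewrite ?E4P.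
apply/flattenP; exists (flatten (map (fun c0 => map (fun e0 => [:: a; b; c0; e0]) E4) E4));
  first by apply/mapP; exists b; rewrite ?E4P.
apply/flattenP; exists (map (fun e0 => [:: a; b; c; e0]) E4); first by apply/mapP; exists c; rewrite ?E4P.
by apply/mapP; exists e; rewrite ?E4P.
Qed.


Fixpoint bfs d l A k (vis fr : seq (seq 'I_d.+1)) : seq (seq 'I_d.+1) :=
  match k with
  | 0 => vis
  | k'.+1 => let nf := undup [seq w <- flatten (map (succs d l A) fr) | w \notin vis] in
             bfs d l A k' (vis ++ nf) nf
  end.

Lemma bfsP d l A x k : (forall y, y \in A) -> forall j vis fr,
  (forall v, v \in vis -> walk_le d l j x v) -> (forall v, v \in fr -> walk_le d l j x v) ->
  forall z, z \in bfs d l A k vis fr -> walk_le d l (j + k) x z.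
Proof.
move=> hA; elim: k => [|k IH] j vis fr hv hf z /=.
  by rewrite addn0; apply: hv.
move=> hz; rewrite -addSnnS.
have hnf : forall v, v \in undup [seq w <- flatten (map (succs d l A) fr) | w \notin vis] ->
    walk_le d l j.+1 x v.
  move=> v; rewrite mem_undup mem_filter => /andP[_ /flattenP[s /mapP[u hu ->]]].
  rewrite mem_filter => /andP[ha _].
  by apply: (@walk_snoc d l j x u v (hf u hu)); rewrite -(@arcbE d l A u v hA).
apply: (IH j.+1 _ _ _ hnf z hz).
move=> v; rewrite mem_cat => /orP[/hv|/hnf] //; exact: walk_S.
Qed.

Definition allcheck :=
  all (fun x => ck_vertex 3 4 x ==> let L := bfs 3 4 E4 6 [:: x] [:: x] in
     all (fun z => ck_vertex 3 4 z ==> (z \in L)) V4) V4.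

Lemma allcheck_true : allcheck.
Proof. Time vm_compute. reflexivity. Qed.

Lemma l4_upper x z : ck_vertex 3 4 x -> ck_vertex 3 4 z -> walk_le 3 4 6 x z.
Proof.
move=> hx hz.
have [sx _ _] := @vertexP 3 4 x hx.
have [sz _ _] := @vertexP 3 4 z hz.
have := allcheck_true; rewrite /allcheck => /allP /(_ x (inV4 x sx)) /implyP /(_ hx).
move=> /allP /(_ z (inV4 z sz)) /implyP /(_ hz) hL.
have := @bfsP 3 4 E4 x 6 E4P 0 [:: x] [:: x].
by apply => // v; rewrite inE => /eqP ->.
Qed.

Definition x4 : seq 'I_4 := [:: @Ordinal 4 0 isT; @Ordinal 4 1 isT; @Ordinal 4 0 isT; @Ordinal 4 1 isT].
Definition z4 : seq 'I_4 := [:: @Ordinal 4 0 isT; @Ordinal 4 2 isT; @Ordinal 4 1 isT; @Ordinal 4 2 isT].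

Lemma l4_lower : [/\ ck_vertex 3 4 x4, ck_vertex 3 4 z4 & forall k, k < 6 -> ~ walk_le 3 4 k x4 z4].
Proof.
split; try by vm_compute.
move=> k hk hw.
have : walk_le 3 4 5 x4 z4 by apply: (@walk_mono 3 4 k 5 x4 z4 hk hw).
move/(@reachbP 3 4 E4 5 x4 z4 E4P) => h.
have : reachb 3 4 E4 5 x4 z4 = false by vm_compute.
by rewrite h.
Qed.

Theorem proposition1 :
  ((forall l : nat, 3 <= l -> l != 4 -> ck_diameter 3 l (2 * l - 1)) /\
   (forall d : nat, 3 <= d -> ck_diameter d 3 (2 * 3 - 1))) /\
  ck_diameter 3 4 6.
Proof.
split; [split|].
- move=> l hl /eqP h4; split; first by move=> x z hx hz; apply: upper.
  have [ho|he] : l %% 2 = 1 \/ l %% 2 = 0 by lia.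
    exact: (@lower_odd 3 l hl ho (or_intror erefl) (leqnn 3)).
  exact: (@lower_even l (ltac:(lia)) he).
- move=> d hd; split; first by move=> x z hx hz; apply: upper.
  exact: (@lower_odd d 3 (leqnn 3) erefl (or_introl erefl) hd).
- split; first exact: l4_upper.
  by exists x4, z4; exact: l4_lower.
Qed.
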